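(* Let $X$ be a metric space and $n\ge0$. Suppose that for every $r>0$ there is a subspace $X_r\subset X$ such that $\operatorname{asdim}(X_r)\le n$ and $r\text{-}\dim(X\setminus X_r)\le n$. Then $\operatorname{asdim}(X)\le n$.
   Context: For $r>0$, the $r$-components of a set $C$ in a metric space are the equivalence classes of points of $C$ joined by finite sequences in $C$ with consecutive distances $\le r$. The $r$-scale dimension $r\text{-}\dim(Z)$ of a metric space $Z$ is the smallest $n\ge0$ such that $Z=Z_1\cup\dots\cup Z_{n+1}$ where, for each $i$, the $r$-components of $Z_i$ have uniformly bounded diameters. $\operatorname{asdim}(Z)\le n$ iff for every $r>0$ there are $D<\infty$ and a decomposition $Z=Z_1\cup\dots\cup Z_{n+1}$ such that all $r$-components of each $Z_i$ have diameter $\le D$ (i.e. $r\text{-}\dim(Z)\le n$ for all $r>0$). *)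

(* Defs.v *)
From Stdlib Require Import Reals Relations.
Open Scope R_scope.

Definition is_metric {X : Type} (d : X -> X -> R) : Prop :=
  (forall x y, 0 <= d x y) /\
  (forall x y, d x y = 0 <-> x = y) /\
  (forall x y, d x y = d y x) /\
  (forall x y z, d x z <= d x y + d y z).

Definition r_step {X : Type} (d : X -> X -> R) (C : X -> Prop) (r : R) (x y : X) : Prop :=
  C x /\ C y /\ d x y <= r.

Definition r_connected {X : Type} (d : X -> X -> R) (C : X -> Prop) (r : R) (x y : X) : Prop :=
  C x /\ C y /\ clos_refl_trans X (r_step d C r) x y.

Definition r_components_bounded {X : Type} (d : X -> X -> R) (C : X -> Prop) (r D : R) : Prop :=
  forall x y, r_connected d C r x y -> d x y <= D.

Definition r_dim_le {X : Type} (d : X -> X -> R) (Z : X -> Prop) (r : R) (n : nat) : Prop :=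
  exists (U : nat -> X -> Prop) (D : R),
    (forall x, Z x <-> exists i, (i <= n)%nat /\ U i x) /\
    (forall i, (i <= n)%nat -> r_components_bounded d (U i) r D).

Definition asdim_le {X : Type} (d : X -> X -> R) (Z : X -> Prop) (n : nat) : Prop :=
  forall r, 0 < r -> r_dim_le d Z r n.

(* Main.v *)
Require Import Defs.
From Stdlib Require Import Reals.
From Stdlib Require Import Relations Lra Classical.
Open Scope R_scope.

Section Aux.
Variables (X : Type) (d : X -> X -> R) (hd : is_metric d).
Variables (V W : X -> Prop) (r s D0 : R).

Definition UU x := V x \/ W x.
Definition near x v := V v /\ (x = v \/ (W x /\ exists w, W w /\ @clos_refl_trans X (@Defs.r_step X d W r) x w /\ d w v <= r)).

Lemma rt_sym (C : X -> Prop) (t : R) x y :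
  @clos_refl_trans X (@Defs.r_step X d C t) x y -> @clos_refl_trans X (@Defs.r_step X d C t) y x.
Proof.
  destruct hd as [_ [_ [hs _]]].
  induction 1.
  - apply rt_step. destruct H as [a [b c]]. repeat split; auto. rewrite hs; auto.
  - apply rt_refl.
  - eapply rt_trans; eauto.
Qed.

Hypothesis hD0 : 0 <= D0.
Hypothesis hr0 : 0 <= r.
Hypothesis hWb : r_components_bounded d W r D0.
Hypothesis hsb : D0 + 2 * r <= s.

Lemma near_dist x v : near x v -> d x v <= D0 + r.
Proof.
  destruct hd as [h0 [h1 [hs ht]]].
  intros [_ [->|[Wx [w [Ww [c dw]]]]]].
  - assert (d v v = 0) by (apply h1; auto). lra.
  - assert (d x w <= D0) by (apply hWb; repeat split; auto).
    pose proof (ht x w v). lra.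
Qed.

Lemma chain x y : @clos_refl_trans_1n X (@Defs.r_step X d UU r) x y -> UU y ->
  (W x /\ W y /\ @clos_refl_trans X (@Defs.r_step X d W r) x y) \/
  exists v1 v2, near x v1 /\ near y v2 /\ @clos_refl_trans X (@Defs.r_step X d V s) v1 v2.
Proof.
  pose proof hd as [h0 [h1 [hs ht]]].
  induction 1 as [y|x x' y st c IH]; intros Uy.
  - destruct Uy as [Vy|Wy].
    + right. exists y, y. repeat split; auto. apply rt_refl.
    + left. repeat split; auto. apply rt_refl.
  - specialize (IH Uy). destruct st as [[Vx|Wx] [Ux' dxx']].
    + right. destruct IH as [[Wx' [Wy cy]]|[v1 [v2 [n1 [n2 cv]]]]].
      * exists x, x. split; [split; auto|]. split; [|apply rt_refl].
        split; auto. right. split; auto. exists x'. repeat split; auto.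
        apply rt_sym; auto. rewrite hs; auto.
      * exists x, v2. split; [split; auto|]. split; auto.
        eapply rt_trans; [|exact cv]. apply rt_step.
        pose proof (near_dist _ _ n1). pose proof (ht x x' v1).
        destruct n1 as [Vv1 _]. repeat split; auto. lra.
    + destruct IH as [[Wx' [Wy cy]]|[v1 [v2 [n1 [n2 cv]]]]].
      * left. repeat split; auto. eapply rt_trans; [|exact cy].
        apply rt_step. repeat split; auto.
      * right. exists v1, v2. split; auto.
        destruct n1 as [Vv1 [<-|[Wx' [w [Ww [cw dw]]]]]].
        -- split; auto. right. split; auto. exists x. repeat split; auto. apply rt_refl.
        -- split; auto. right. split; auto. exists w. repeat split; auto.
           eapply rt_trans; [|exact cw]. apply rt_step. repeat split; auto.
Qed.
End Aux.

Theorem mainTheorem10 (X : Type) (d : X -> X -> R) (hd : is_metric d) (n : nat) :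
  (forall r, 0 < r ->
     exists Xr : X -> Prop,
       asdim_le d Xr n /\ r_dim_le d (fun x => ~ Xr x) r n) ->
  asdim_le d (fun _ => True) n.
Proof.
  intros H r hr.
  pose proof hd as [h0 [h1 [hs ht]]].
  destruct (H r hr) as [Y [hY [W [D [hWc hWb]]]]].
  set (D0 := Rmax D 0).
  assert (hD0 : 0 <= D0) by apply Rmax_r.
  assert (hDD : D <= D0) by apply Rmax_l.
  destruct (hY (D0 + 2 * r)) as [V [D' [hVc hVb]]]; [lra|].
  set (D1 := Rmax D' 0).
  assert (hD1 : 0 <= D1) by apply Rmax_r.
  assert (hDD' : D' <= D1) by apply Rmax_l.
  exists (fun i x => V i x \/ W i x), (3 * D0 + 2 * r + D1). split.
  - intros x; split; intros _; [|exact I].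
    destruct (classic (Y x)) as [Yx|nYx].
    + destruct (proj1 (hVc x) Yx) as [i [hi Vi]]. exists i; auto.
    + destruct (proj1 (hWc x) nYx) as [i [hi Wi]]. exists i; auto.
  - intros i hi x y [Ux [Uy c]].
    assert (hWb' : r_components_bounded d (W i) r D0).
    { intros a b hab. pose proof (hWb i hi a b hab). lra. }
    apply clos_rt_rt1n in c.
    destruct (chain X d hd (V i) (W i) r (D0 + 2 * r) D0 hD0 (Rlt_le _ _ hr) hWb' (Rle_refl _) x y c Uy)
      as [[Wx [Wy cy]]|[v1 [v2 [n1 [n2 cv]]]]].
    + assert (d x y <= D0) by (apply hWb'; repeat split; auto). lra.
    + pose proof (near_dist X d hd (V i) (W i) r D0 hD0 (Rlt_le _ _ hr) hWb' _ _ n1).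
      pose proof (near_dist X d hd (V i) (W i) r D0 hD0 (Rlt_le _ _ hr) hWb' _ _ n2).
      destruct n1 as [Vv1 _], n2 as [Vv2 _].
      assert (d v1 v2 <= D') by (apply (hVb i hi); repeat split; auto).
      pose proof (ht x v1 y). pose proof (ht v1 v2 y). rewrite (hs v2 y) in *.
      lra.
Qed.
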